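(* Let $\alpha,\beta\in(0,1)$ with $\alpha\ne\beta$, and set $x=[\alpha N]$, $y=[\beta N]$. (i) For the symmetric walk and for the weakly asymmetric walk (any fixed $c>0$), $$\lim_{N\to\infty}P_x\big(G(y)\equiv1\ (\mathrm{mod}\ 2)\,\big|\,T_y<T_N<T_0\big)=\lim_{N\to\infty}P_x\big(G(y)\equiv1\ (\mathrm{mod}\ 2)\,\big|\,T_y<T_0<T_N\big)=\frac12,$$ and consequently $\lim_{N\to\infty}P_x\big(G(y)\equiv1\ (\mathrm{mod}\ 2)\,\big|\,T_y<\tau_N\big)=\frac12$. (ii) For the asymmetric walk with fixed $q<p$ and $\alpha<\beta$, $$\lim_{N\to\infty}P_x\big(G(y)\equiv1\ (\mathrm{mod}\ 2)\big)=\frac{1}{2-(p-q)}.$$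
   Context: Let $\mathcal T_N=\{0,\dots,N\}$ and let $(X_n)$ be a nearest-neighbour random walk on $\mathcal T_N$ stepping right with probability $p_N$ and left with probability $q_N=1-p_N$, independently, stopped the first time it is at $0$ or $N$. $P_x$ denotes the law with $X_0=x$. The walk is called: - symmetric if $p_N=q_N=1/2$; - weakly asymmetric (fixed $c>0$) if $q_N=1/2-c/N$ and $p_N=1/2+c/N$; - asymmetric if $p_N=p$ and $q_N=q$ are fixed with $p+q=1$ and $q<p$. $T_a=\inf\{n\ge1:X_n=a\}$, $\tau_N=T_0\wedge T_N$, and $G(y)=\sum_{k=0}^{\tau_N}\mathbf 1\{X_k=y\}$ is the number of visits to $y$ before exit. $[\cdot]$ is the integer part. *)

(* Defs.v *)
From Stdlib Require Import Reals List Arith Bool Lia ClassicalEpsilon.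
Import ListNotations.
Open Scope R_scope.

(* All coin sequences of length n (true = step right, false = step left). *)
Fixpoint bool_lists (n : nat) : list (list bool) :=
  match n with
  | O => [nil]
  | S n => flat_map (fun s => [true :: s; false :: s]) (bool_lists n)
  end.

Definition weight (p : R) (s : list bool) : R :=
  fold_right (fun (b : bool) (acc : R) => (if b then p else 1 - p) * acc) 1 s.

(* Trajectory X_0, X_1, ... of the walk on {0..N} started at x driven by the
   coins s, truncated at the exit time tau_N (the walk is stopped on {0,N}),
   or at the end of s if exit has not happened yet. *)
Fixpoint run (N x : nat) (s : list bool) : list nat :=
  match s with
  | nil => [x]
  | b :: s' =>
      if (x =? 0)%nat || (x =? N)%nat then [x]
      else x :: run N (if b then S x else Nat.pred x) s'
  end.

Definition absorbed (N : nat) (path : list nat) : bool :=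
  let z := last path 0%nat in ((z =? 0)%nat || (z =? N)%nat).

(* P_x(tau_N <= n and A), A an event on the (stopped) trajectory up to tau_N. *)
Definition Qn (p : R) (N x : nat) (A : list nat -> bool) (n : nat) : R :=
  fold_right Rplus 0
    (map (fun s => if absorbed N (run N x s) && A (run N x s)
                   then weight p s else 0) (bool_lists n)).

(* P_x(A) = lim_n P_x(tau_N <= n, A)   (tau_N < infinity a.s.). *)
Definition Prob (p : R) (N x : nat) (A : list nat -> bool) : R :=
  epsilon (inhabits 0) (fun l => Un_cv (Qn p N x A) l).

Definition CProb (p : R) (N x : nat) (A B : list nat -> bool) : R :=
  Prob p N x (fun w => A w && B w) / Prob p N x B.

(* Hitting time T_a = inf{n >= 1 : X_n = a}; None = +infinity.
   On the stopped trajectory [X_0; ...; X_tau] this is the first index >= 1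
   where a occurs (after tau the walk stays at X_tau). *)
Fixpoint find_idx (a : nat) (l : list nat) (i : nat) : option nat :=
  match l with
  | nil => None
  | h :: t => if (h =? a)%nat then Some i else find_idx a t (S i)
  end.

Definition T (a : nat) (path : list nat) : option nat :=
  match path with nil => None | _ :: t => find_idx a t 1 end.

Definition ltT (u v : option nat) : bool :=
  match u, v with
  | Some i, Some j => (i <? j)%nat
  | Some _, None => true
  | None, _ => false
  end.

Definition G (y : nat) (path : list nat) : nat := count_occ Nat.eq_dec path y.

Definition ipart (r : R) : nat := Z.to_nat (Int_part r).

(* minimum in nat ∪ {+infinity}; tau_N = minT (T 0) (T N) *)
Definition minT (u v : option nat) : option nat :=
  match u, v with
  | Some i, Some j => Some (Nat.min i j)
  | Some i, None => Some i
  | None, v => v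
  end.

(* Main.v *)
Require Import Defs.
From Stdlib Require Import Reals List Arith Bool Lia Lra ZArith ClassicalEpsilon.
Import ListNotations.
Open Scope R_scope.

Definition sumL (f : list bool -> R) (l : list (list bool)) : R :=
  fold_right Rplus 0 (map f l).

Lemma sumL_flat (F : list bool -> R) l :
  sumL F (flat_map (fun s => [true :: s; false :: s]) l)
  = sumL (fun s => F (true :: s) + F (false :: s)) l.
Proof.
  induction l as [|a l IH]; simpl; [reflexivity|].
  unfold sumL in *; simpl. rewrite IH. ring.
Qed.

Lemma sumL_ext f g l : (forall s, f s = g s) -> sumL f l = sumL g l.
Proof. intros H; induction l; unfold sumL in *; simpl; [reflexivity|]. rewrite H, IHl; reflexivity. Qed.

Lemma sumL_plus f g l : sumL (fun s => f s + g s) l = sumL f l + sumL g l.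
Proof. induction l; unfold sumL in *; simpl; [ring|]. rewrite IHl; ring. Qed.

Lemma sumL_scal a f l : sumL (fun s => a * f s) l = a * sumL f l.
Proof. induction l; unfold sumL in *; simpl; [ring|]. rewrite IHl; ring. Qed.

Lemma sumL_zero l : sumL (fun _ => 0) l = 0.
Proof. induction l; unfold sumL in *; simpl; [ring|]. rewrite IHl; ring. Qed.

Lemma sum_weight p n : sumL (weight p) (bool_lists n) = 1.
Proof.
  induction n; simpl. { unfold sumL; simpl; ring. }
  rewrite sumL_flat. rewrite <- IHn. apply sumL_ext. intros s. simpl. ring.
Qed.

Lemma run_nonnil N x s : run N x s <> nil.
Proof. destruct s; simpl; [discriminate|]. destruct (_ || _); discriminate. Qed.

Lemma last_cons_nn (z : nat) l d : l <> nil -> last (z :: l) d = last l d.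
Proof. destruct l; [congruence|]. reflexivity. Qed.

Lemma run_bd N z s : ((z =? 0)%nat || (z =? N)%nat) = true -> run N z s = [z].
Proof. intros H; destruct s; simpl; [reflexivity|]. rewrite H; reflexivity. Qed.

Definition inter N z := ((z =? 0)%nat || (z =? N)%nat) = false.

Lemma Qn_bd p N z A n : ((z =? 0)%nat || (z =? N)%nat) = true ->
  Qn p N z A n = if A [z] then 1 else 0.
Proof.
  intros H. unfold Qn. fold (sumL (fun s => if absorbed N (run N z s) && A (run N z s)
                   then weight p s else 0) (bool_lists n)).
  rewrite (sumL_ext _ (fun s => if A [z] then weight p s else 0)).
  - destruct (A [z]). apply sum_weight. apply sumL_zero.
  - intros s. rewrite run_bd by exact H. unfold absorbed. simpl. rewrite H. reflexivity.
Qed.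

Lemma Qn_step p N z A n : inter N z ->
  Qn p N z A (S n) = p * Qn p N (S z) (fun w => A (z :: w)) n
                     + (1 - p) * Qn p N (Nat.pred z) (fun w => A (z :: w)) n.
Proof.
  intros H. unfold Qn. simpl.
  fold (sumL (fun s => if absorbed N (run N z s) && A (run N z s)
                   then weight p s else 0) (flat_map (fun s => [true :: s; false :: s]) (bool_lists n))).
  rewrite sumL_flat.
  fold (sumL (fun s => if absorbed N (run N (S z) s) && A (z :: run N (S z) s)
                   then weight p s else 0) (bool_lists n)).
  fold (sumL (fun s => if absorbed N (run N (Nat.pred z) s) && A (z :: run N (Nat.pred z) s)
                   then weight p s else 0) (bool_lists n)).
  rewrite <- !sumL_scal, <- sumL_plus. apply sumL_ext. intros s.
  unfold inter in H. simpl. rewrite H.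
  unfold absorbed. rewrite !last_cons_nn by apply run_nonnil.
  destruct (_ && A (z :: run N (S z) s)); destruct (_ && A (z :: run N (Nat.pred z) s)); ring.
Qed.

Lemma Qn_0_int (p : R) (N z : nat) A : inter N z -> Qn p N z A 0 = 0.
Proof. intros H. unfold Qn, absorbed; simpl. unfold inter in H. rewrite H. simpl. ring. Qed.

Lemma bd_dec (N z : nat) : {((z =? 0)%nat || (z =? N)%nat) = true} + {inter N z}.
Proof. unfold inter. destruct (_ || _); [left|right]; reflexivity. Qed.

Lemma Qn_range (p : R) (N : nat) : 0 <= p <= 1 -> forall n z A, 0 <= Qn p N z A n <= 1.
Proof.
  intros Hp n. induction n; intros z A.
  - destruct (bd_dec N z) as [H|H].
    + rewrite Qn_bd by exact H. destruct (A [z]); lra.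
    + rewrite Qn_0_int by exact H. lra.
  - destruct (bd_dec N z) as [H|H].
    + rewrite Qn_bd by exact H. destruct (A [z]); lra.
    + rewrite Qn_step by exact H.
      destruct (IHn (S z) (fun w => A (z :: w))), (IHn (Nat.pred z) (fun w => A (z :: w))).
      nra.
Qed.

Lemma Qn_mono (p : R) (N : nat) : 0 <= p <= 1 -> forall n z A, Qn p N z A n <= Qn p N z A (S n).
Proof.
  intros Hp n. induction n; intros z A.
  - destruct (bd_dec N z) as [H|H].
    + rewrite !Qn_bd by exact H. lra.
    + rewrite Qn_0_int by exact H. apply Qn_range; auto.
  - destruct (bd_dec N z) as [H|H].
    + rewrite !Qn_bd by exact H. lra.
    + rewrite (Qn_step _ _ _ _ (S n)) by exact H. rewrite Qn_step by exact H.
      pose proof (IHn (S z) (fun w => A (z :: w))) as H1.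
      pose proof (IHn (Nat.pred z) (fun w => A (z :: w))) as H2.
      nra.
Qed.

Lemma Qn_cv (p : R) (N z : nat) A : 0 <= p <= 1 -> exists l, Un_cv (Qn p N z A) l.
Proof.
  intros Hp. destruct (growing_cv (Qn p N z A)) as [l Hl].
  - intros n. apply Qn_mono; auto.
  - exists 1. intros x [n ->]. apply Qn_range; auto.
  - exists l; exact Hl.
Qed.

Lemma Prob_cv (p : R) (N z : nat) A : 0 <= p <= 1 -> Un_cv (Qn p N z A) (Prob p N z A).
Proof.
  intros Hp. unfold Prob. apply epsilon_spec. apply Qn_cv; auto.
Qed.

Lemma Prob_eq (p : R) (N z : nat) A l : 0 <= p <= 1 -> Un_cv (Qn p N z A) l -> Prob p N z A = l.
Proof. intros Hp H. eapply UL_sequence. apply Prob_cv; auto. exact H. Qed.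

Lemma cv_shift (u : nat -> R) l : Un_cv (fun n => u (S n)) l -> Un_cv u l.
Proof.
  intros H eps He. destruct (H eps He) as [M HM]. exists (S M). intros n Hn.
  destruct n; [lia|]. apply HM; lia.
Qed.

Lemma cv_const (c : R) : Un_cv (fun _ => c) c.
Proof. intros eps He. exists O. intros. unfold Rdist. rewrite Rminus_diag, Rabs_R0; lra. Qed.

Lemma Prob_bd (p : R) (N z : nat) A : 0 <= p <= 1 -> ((z =? 0)%nat || (z =? N)%nat) = true ->
  Prob p N z A = if A [z] then 1 else 0.
Proof.
  intros Hp H. apply Prob_eq; auto. eapply Un_cv_ext; [|apply cv_const].
  intros n; simpl. rewrite Qn_bd by exact H; reflexivity.
Qed.

Lemma Prob_step (p : R) (N z : nat) A : 0 <= p <= 1 -> inter N z ->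
  Prob p N z A = p * Prob p N (S z) (fun w => A (z :: w))
                 + (1 - p) * Prob p N (Nat.pred z) (fun w => A (z :: w)).
Proof.
  intros Hp H. apply Prob_eq; auto. apply cv_shift.
  eapply Un_cv_ext. { intros n. symmetry. apply Qn_step; exact H. }
  apply CV_plus; apply CV_mult; try apply cv_const; apply Prob_cv; auto.
Qed.

Lemma Prob_ext (p : R) (N z : nat) A B : 0 <= p <= 1 ->
  (forall s, absorbed N (run N z s) = true -> A (run N z s) = B (run N z s)) ->
  Prob p N z A = Prob p N z B.
Proof.
  intros Hp H. apply Prob_eq; auto. eapply Un_cv_ext; [|apply Prob_cv; auto].
  intros n. unfold Qn. f_equal. apply map_ext. intros s.
  destruct (absorbed N (run N z s)) eqn:E; simpl; [|reflexivity].
  rewrite H by exact E. reflexivity.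
Qed.

Lemma Prob_add (p : R) (N z : nat) A A1 A2 : 0 <= p <= 1 ->
  (forall w, A w = A1 w || A2 w) -> (forall w, A1 w && A2 w = false) ->
  Prob p N z A = Prob p N z A1 + Prob p N z A2.
Proof.
  intros Hp H1 H2. apply Prob_eq; auto.
  eapply Un_cv_ext; [|apply CV_plus; apply Prob_cv; auto].
  intros n. unfold Qn.
  fold (sumL (fun s => if absorbed N (run N z s) && A (run N z s) then weight p s else 0) (bool_lists n)).
  fold (sumL (fun s => if absorbed N (run N z s) && A1 (run N z s) then weight p s else 0) (bool_lists n)).
  fold (sumL (fun s => if absorbed N (run N z s) && A2 (run N z s) then weight p s else 0) (bool_lists n)).
  rewrite <- sumL_plus. apply sumL_ext. intros s. rewrite H1.
  specialize (H2 (run N z s)).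
  destruct (absorbed N (run N z s)), (A1 (run N z s)), (A2 (run N z s)); simpl in *; try ring; discriminate.
Qed.

Lemma Prob_false (p : R) (N z : nat) A : 0 <= p <= 1 ->
  (forall s, A (run N z s) = false) -> Prob p N z A = 0.
Proof.
  intros Hp H. apply Prob_eq; auto. eapply Un_cv_ext; [|apply cv_const].
  intros n. unfold Qn. simpl.
  fold (sumL (fun s => if absorbed N (run N z s) && A (run N z s) then weight p s else 0) (bool_lists n)).
  rewrite (sumL_ext _ (fun _ => 0)). symmetry; apply sumL_zero. intros s. rewrite H, andb_false_r. reflexivity.
Qed.

Fixpoint Sg (r : R) (m : nat) : R := match m with O => 0 | S m' => Sg r m' + r ^ m' end.

Definition harm (p : R) (f : nat -> R) (lo hi : nat) :=
  forall z, (lo < z < hi)%nat -> f z = p * f (S z) + (1 - p) * f (Nat.pred z).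

Lemma Sg_nonneg r m : 0 <= r -> 0 <= Sg r m.
Proof. intros Hr; induction m; simpl; [lra|]. pose proof (pow_le r m Hr); lra. Qed.

Lemma Sg_ge1 r m : 0 <= r -> (1 <= m)%nat -> 1 <= Sg r m.
Proof.
  intros Hr Hm. induction m; [lia|]. simpl. destruct m.
  - simpl; lra.
  - pose proof (pow_le r (S m) Hr). assert (1 <= Sg r (S m)) by (apply IHm; lia). lra.
Qed.

Lemma Sg_mono r m n : 0 <= r -> (m <= n)%nat -> Sg r m <= Sg r n.
Proof.
  intros Hr H. induction H; [lra|]. simpl. pose proof (pow_le r m0 Hr). lra.
Qed.

Lemma Sg_smono r m n : 0 < r -> (m < n)%nat -> Sg r m < Sg r n.
Proof.
  intros Hr H. induction H; simpl.
  - pose proof (pow_lt r m Hr). lra.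
  - pose proof (pow_lt r m0 Hr). lra.
Qed.

Lemma harm_unique p f g lo hi : 0 < p <= 1 -> harm p f lo hi -> harm p g lo hi ->
  (lo <= hi)%nat -> f lo = g lo -> f hi = g hi ->
  forall z, (lo <= z <= hi)%nat -> f z = g z.
Proof.
  intros Hp Hf Hg Hlh H0 H1.
  set (d := fun z => f z - g z).
  set (r := (1 - p) / p).
  assert (Hr : 0 <= r). { unfold r. apply Rmult_le_pos; [lra|]. left; apply Rinv_0_lt_compat; lra. }
  assert (Hd0 : d lo = 0) by (unfold d; lra).
  assert (S1 : forall k, (lo + k + 1 <= hi)%nat -> d (lo + k + 1)%nat - d (lo + k)%nat = r ^ k * (d (lo + 1)%nat - d lo)).
  { induction k; intros Hk.
    - simpl. rewrite Nat.add_0_r. ring.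
    - assert (Hz : (lo < lo + k + 1 < hi)%nat) by lia.
      pose proof (Hf _ Hz) as E1. pose proof (Hg _ Hz) as E2.
      replace (Nat.pred (lo + k + 1)) with (lo + k)%nat in E1, E2 by lia.
      replace (S (lo + k + 1)) with (lo + S k + 1)%nat in E1, E2 by lia.
      replace (lo + k + 1)%nat with (lo + S k)%nat in E1, E2 by lia.
      specialize (IHk ltac:(lia)).
      replace (lo + k + 1)%nat with (lo + S k)%nat in IHk by lia.
      assert (E : p * (d (lo + S k + 1)%nat - d (lo + S k)%nat) = (1 - p) * (d (lo + S k)%nat - d (lo + k)%nat)).
      { unfold d. lra. }
      rewrite IHk in E.
      simpl. apply (Rmult_eq_reg_l p); [|lra]. rewrite E. unfold r. field. lra. }
  assert (S2 : forall k, (lo + k <= hi)%nat -> d (lo + k)%nat = d (lo + 1)%nat * Sg r k).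
  { induction k; intros Hk.
    - rewrite Nat.add_0_r. simpl. rewrite Hd0. ring.
    - simpl. pose proof (S1 k ltac:(lia)) as E. rewrite Hd0 in E.
      replace (lo + S k)%nat with (lo + k + 1)%nat by lia.
      rewrite IHk in E by lia. lra. }
  intros z Hz.
  destruct (Nat.eq_dec lo hi) as [Heq|Hne].
  - assert (z = lo) by lia. subst. exact H0.
  - assert (Hd1 : d (lo + 1)%nat = 0).
    { pose proof (S2 (hi - lo)%nat ltac:(lia)) as E.
      replace (lo + (hi - lo))%nat with hi in E by lia.
      assert (d hi = 0) by (unfold d; lra).
      pose proof (Sg_ge1 r (hi - lo) Hr ltac:(lia)).
      rewrite H in E. symmetry in E. apply Rmult_integral in E. destruct E; [auto|lra]. }
    pose proof (S2 (z - lo)%nat ltac:(lia)) as E.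
    replace (lo + (z - lo))%nat with z in E by lia.
    rewrite Hd1 in E. unfold d in E. lra.
Qed.

Lemma harm_Sg p a b lo hi : 0 < p ->
  harm p (fun z => a + b * Sg ((1 - p) / p) (z - lo)) lo hi.
Proof.
  intros Hp z Hz.
  replace (S z - lo)%nat with (S (z - lo)) by lia.
  replace (Nat.pred z - lo)%nat with (Nat.pred (z - lo)) by lia.
  destruct (z - lo)%nat as [|m] eqn:E; [lia|]. simpl.
  field. lra.
Qed.

Lemma solve_harm p h lo hi : 0 < p <= 1 -> (lo < hi)%nat -> harm p h lo hi ->
  forall z, (lo <= z <= hi)%nat ->
  h z = h lo + (h hi - h lo) * (Sg ((1-p)/p) (z - lo) / Sg ((1-p)/p) (hi - lo)).
Proof.
  intros Hp Hlh H z Hz.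
  set (r := (1-p)/p).
  assert (Hr : 0 <= r). { unfold r. apply Rmult_le_pos; [lra|]. left; apply Rinv_0_lt_compat; lra. }
  assert (Hs : 1 <= Sg r (hi - lo)) by (apply Sg_ge1; auto; lia).
  pose proof (harm_unique p h (fun z => h lo + ((h hi - h lo) / Sg r (hi - lo)) * Sg r (z - lo)) lo hi
     Hp H (harm_Sg p (h lo) ((h hi - h lo) / Sg r (hi - lo)) lo hi ltac:(lra)) ltac:(lia)) as U.
  rewrite U; [unfold Rdiv; ring| | |auto].
  - rewrite Nat.sub_diag. simpl. ring.
  - field. lra.
Qed.

Fixpoint goodpath (N : nat) (l : list nat) : Prop :=
  match l with
  | nil => False
  | z :: l' => match l' with nil => True | _ => (0 < z < N)%nat /\ goodpath N l' end
  end.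

Lemma run_good N z s : (z <= N)%nat -> goodpath N (run N z s).
Proof.
  revert z; induction s as [|b s IH]; intros z Hz; simpl; [exact I|].
  destruct ((z =? 0)%nat || (z =? N)%nat) eqn:E; [exact I|].
  apply orb_false_iff in E as [E1 E2]. apply Nat.eqb_neq in E1, E2.
  pose proof (run_nonnil N (if b then S z else Nat.pred z) s) as Hn.
  destruct (run N (if b then S z else Nat.pred z) s) eqn:R; [congruence|].
  split; [lia|]. rewrite <- R. apply IH. destruct b; lia.
Qed.

Lemma find_none a l i : find_idx a l i = None <-> count_occ Nat.eq_dec l a = 0%nat.
Proof.
  revert i; induction l as [|h l IH]; intros i; simpl; [tauto|].
  destruct (h =? a)%nat eqn:E; destruct (Nat.eq_dec h a); try (apply Nat.eqb_eq in E || apply Nat.eqb_neq in E); try congruence.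
  - split; discriminate.
  - apply IH.
Qed.

Lemma find_cons a h t i : find_idx a (h :: t) i = if (h =? a)%nat then Some i else find_idx a t (S i).
Proof. reflexivity. Qed.

Definition ends0N (N : nat) (l : list nat) := last l 0%nat = 0%nat \/ last l 0%nat = N.

Lemma find_int N a l i j : goodpath N l -> ends0N N l -> (0 < a < N)%nat ->
  find_idx a l i = Some j -> (j < i + length l - 1)%nat.
Proof.
  revert i; induction l as [|z l IH]; intros i Hg He Ha Hf; [destruct Hg|].
  destruct l as [|z' l'].
  - unfold ends0N in He; simpl in *. destruct (z =? a)%nat eqn:E; [|discriminate].
    apply Nat.eqb_eq in E; subst; lia.
  - destruct Hg as [Hz Hg]. simpl in Hf. destruct (z =? a)%nat eqn:E.
    + injection Hf; intros; subst. simpl. lia.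
    + specialize (IH (S i) Hg He Ha Hf). simpl in *. lia.
Qed.

Lemma find_end N b l i : goodpath N l -> last l 0%nat = b -> (b = 0 \/ b = N)%nat ->
  find_idx b l i = Some (i + length l - 1)%nat.
Proof.
  revert i; induction l as [|z l IH]; intros i Hg He Hb; [destruct Hg|].
  destruct l as [|z' l'].
  - simpl in *. subst. rewrite Nat.eqb_refl. f_equal; lia.
  - destruct Hg as [Hz Hg]. rewrite find_cons. assert (E : (z =? b)%nat = false) by (apply Nat.eqb_neq; lia).
    rewrite E. rewrite (IH (S i) Hg He Hb). f_equal. simpl. lia.
Qed.

Lemma find_other N c l i : goodpath N l -> (c = 0 \/ c = N)%nat -> c <> last l 0%nat ->
  find_idx c l i = None.
Proof.
  revert i; induction l as [|z l IH]; intros i Hg Hc Hne; [destruct Hg|].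
  destruct l as [|z' l'].
  - simpl in *. assert (E : (z =? c)%nat = false) by (apply Nat.eqb_neq; lia). rewrite E. reflexivity.
  - destruct Hg as [Hz Hg]. rewrite find_cons. assert (E : (z =? c)%nat = false) by (apply Nat.eqb_neq; lia).
    rewrite E. apply IH; auto.
Qed.

Lemma ev_facts N x y rest : (0 < x < N)%nat -> x <> y -> (0 < y < N)%nat ->
  goodpath N (x :: rest) -> ends0N N (x :: rest) ->
  (ltT (T y (x::rest)) (T N (x::rest)) && ltT (T N (x::rest)) (T 0 (x::rest))
     = (0 <? G y (x::rest))%nat && (last (x::rest) 0%nat =? N)%nat) /\
  (ltT (T y (x::rest)) (T 0 (x::rest)) && ltT (T 0 (x::rest)) (T N (x::rest))
     = (0 <? G y (x::rest))%nat && (last (x::rest) 0%nat =? 0)%nat) /\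
  (ltT (T y (x::rest)) (minT (T 0 (x::rest)) (T N (x::rest))) = (0 <? G y (x::rest))%nat).
Proof.
  intros Hx Hxy Hy Hg He.
  destruct rest as [|z rest']; [unfold ends0N in He; simpl in He; lia|].
  destruct Hg as [_ Hg].
  assert (Hl : last (x :: z :: rest') 0%nat = last (z :: rest') 0%nat) by reflexivity.
  remember (z :: rest') as rest eqn:Hr.
  unfold ends0N in He. rewrite Hl in *.
  unfold T, G. rewrite count_occ_cons_neq by exact Hxy.
  assert (HY : (find_idx y rest 1 = None /\ count_occ Nat.eq_dec rest y = 0%nat) \/
               exists j, find_idx y rest 1 = Some j /\ (j < 1 + length rest - 1)%nat /\
                         count_occ Nat.eq_dec rest y <> 0%nat).
  { destruct (find_idx y rest 1) as [j|] eqn:F.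
    - right. exists j. split; [reflexivity|]. split.
      + eapply find_int; eauto.
      + intros C. apply (find_none y rest 1) in C. rewrite F in C; discriminate.
    - left. split; [reflexivity|]. apply find_none in F; exact F. }
  destruct He as [He|He].
  - rewrite (find_end N 0 rest 1 Hg He (or_introl eq_refl)).
    rewrite (find_other N N rest 1 Hg (or_intror eq_refl) ltac:(lia)).
    rewrite He. assert (E : (0 =? N)%nat = false) by (apply Nat.eqb_neq; lia). rewrite E.
    destruct HY as [[F C]|[j [F [Hj C]]]]; rewrite F; simpl.
    + rewrite C. simpl. repeat split; reflexivity.
    + apply Nat.ltb_lt in Hj. simpl in Hj. rewrite Hj.
      destruct (count_occ Nat.eq_dec rest y); [congruence|]. simpl. repeat split; reflexivity.
  - rewrite (find_end N N rest 1 Hg He (or_intror eq_refl)).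
    rewrite (find_other N 0 rest 1 Hg (or_introl eq_refl) ltac:(lia)).
    rewrite He. assert (E : (N =? 0)%nat = false) by (apply Nat.eqb_neq; lia). rewrite E, Nat.eqb_refl.
    destruct HY as [[F C]|[j [F [Hj C]]]]; rewrite F; simpl.
    + rewrite C. simpl. repeat split; reflexivity.
    + apply Nat.ltb_lt in Hj. simpl in Hj. rewrite Hj.
      destruct (count_occ Nat.eq_dec rest y); [congruence|]. simpl. repeat split; reflexivity.
Qed.

Definition EU (y : nat) (f : nat -> bool) (w : list nat) :=
  Nat.odd (G y w) && f (last w 0%nat).
Definition EV (y : nat) (f : nat -> bool) (w : list nat) :=
  Nat.even (G y w) && (0 <? G y w)%nat && f (last w 0%nat).
Definition EK (y : nat) (f : nat -> bool) (w : list nat) :=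
  (G y w =? 0)%nat && f (last w 0%nat).

Lemma Prob_step_map (p : R) (N z : nat) A B : 0 <= p <= 1 -> inter N z ->
  (forall w, w <> nil -> A (z :: w) = B w) ->
  Prob p N z A = p * Prob p N (S z) B + (1 - p) * Prob p N (Nat.pred z) B.
Proof.
  intros Hp Hz H. rewrite Prob_step by auto.
  rewrite (Prob_ext p N (S z) _ B), (Prob_ext p N (Nat.pred z) _ B); auto;
  intros s _; apply H, run_nonnil.
Qed.

Lemma inter_of (N z : nat) : (0 < z < N)%nat -> inter N z.
Proof.
  intros H. unfold inter. apply orb_false_iff; split; apply Nat.eqb_neq; lia.
Qed.

Lemma G_neq y z w : z <> y -> G y (z :: w) = G y w.
Proof. intros; unfold G; apply count_occ_cons_neq; auto. Qed.
Lemma G_eq y w : G y (y :: w) = S (G y w).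
Proof. unfold G; apply count_occ_cons_eq; auto. Qed.

Definition indb (b : bool) : R := if b then 1 else 0.

Definition rr (p : R) := (1 - p) / p.
Definition aa (p : R) (N y : nat) := 1 - 1 / Sg (rr p) (N - y).
Definition bb (p : R) (y : nat) := Sg (rr p) (Nat.pred y) / Sg (rr p) y.
Definition rho (p : R) (N y : nat) := p * aa p N y + (1 - p) * bb p y.
Definition DD (p : R) (N y : nat) (f : nat -> bool) :=
  p * indb (f N) * (1 - aa p N y) + (1 - p) * indb (f 0%nat) * (1 - bb p y).

Lemma master (p : R) (N x y : nat) (f : nat -> bool) :
  0 < p <= 1 -> (0 < y < N)%nat -> (0 < x < N)%nat -> x <> y ->
  let u := Prob p N y (EU y f) in
  exists C,
    Prob p N x (EU y f) = u * C /\ Prob p N x (EV y f) = rho p N y * u * C /\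
    u * (1 - rho p N y ^ 2) = DD p N y f /\
    ((x < y)%nat -> C = Sg (rr p) x / Sg (rr p) y) /\
    ((y < x)%nat -> C = 1 - Sg (rr p) (x - y) / Sg (rr p) (N - y)).
Proof.
  intros Hp Hy Hx Hxy u.
  assert (Hp' : 0 <= p <= 1) by lra.
  set (U := fun z => Prob p N z (EU y f)).
  set (V := fun z => Prob p N z (EV y f)).
  set (K := fun z => Prob p N z (EK y f)).
  assert (Hint : forall (A : list nat -> bool), (forall z w, z <> y -> w <> nil -> A (z :: w) = A w) ->
     harm p (fun z => Prob p N z A) 0 y /\ harm p (fun z => Prob p N z A) y N).
  { intros A HA. split; intros z Hz; apply Prob_step_map; auto; try apply inter_of; try lia;
    intros w Hw; apply HA; auto; lia. }
  assert (HU : harm p U 0 y /\ harm p U y N).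
  { apply Hint. intros z w Hz Hw. unfold EU. rewrite G_neq, last_cons_nn by auto. reflexivity. }
  assert (HV : harm p V 0 y /\ harm p V y N).
  { apply Hint. intros z w Hz Hw. unfold EV. rewrite G_neq, last_cons_nn by auto. reflexivity. }
  assert (HK : harm p K 0 y /\ harm p K y N).
  { apply Hint. intros z w Hz Hw. unfold EK. rewrite G_neq, last_cons_nn by auto. reflexivity. }
  assert (Hb0 : ((0 =? 0)%nat || (0 =? N)%nat) = true) by reflexivity.
  assert (HbN : ((N =? 0)%nat || (N =? N)%nat) = true) by (rewrite Nat.eqb_refl, orb_true_r; reflexivity).
  assert (G0 : G y [0%nat] = 0%nat) by (rewrite G_neq by lia; reflexivity).
  assert (GN : G y [N] = 0%nat) by (rewrite G_neq by lia; reflexivity).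
  assert (U0 : U 0%nat = 0) by (unfold U; rewrite Prob_bd by auto; unfold EU; rewrite G0; reflexivity).
  assert (UN : U N = 0) by (unfold U; rewrite Prob_bd by auto; unfold EU; rewrite GN; reflexivity).
  assert (V0 : V 0%nat = 0) by (unfold V; rewrite Prob_bd by auto; unfold EV; rewrite G0; reflexivity).
  assert (VN : V N = 0) by (unfold V; rewrite Prob_bd by auto; unfold EV; rewrite GN; reflexivity).
  assert (K0 : K 0%nat = indb (f 0%nat)) by (unfold K; rewrite Prob_bd by auto; unfold EK; rewrite G0; simpl; destruct (f 0%nat); reflexivity).
  assert (KN : K N = indb (f N)) by (unfold K; rewrite Prob_bd by auto; unfold EK; rewrite GN; simpl; destruct (f N); reflexivity).
  assert (Hiy : inter N y) by (apply inter_of; lia).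
  assert (Uy : U y = p * (V (S y) + K (S y)) + (1 - p) * (V (Nat.pred y) + K (Nat.pred y))).
  { assert (Hadd : forall z, Prob p N z (fun w => EV y f w || EK y f w) = V z + K z).
    { intros z. apply Prob_add; auto.
      intros w; unfold EV, EK; destruct (G y w); simpl; [reflexivity|].
      rewrite !andb_false_r; reflexivity. }
    unfold U. rewrite (Prob_step_map p N y _ (fun w => EV y f w || EK y f w)); auto.
    - rewrite !Hadd. reflexivity.
    - intros w Hw. unfold EU, EV, EK. rewrite G_eq, last_cons_nn by auto. rewrite Nat.odd_succ.
      destruct (G y w); simpl; [destruct (f (last w 0%nat)); reflexivity|].
      rewrite orb_false_r, andb_true_r. reflexivity. }
  assert (Vy : V y = p * U (S y) + (1 - p) * U (Nat.pred y)).
  { unfold V. apply Prob_step_map; auto. intros w Hw. unfold EU, EV.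
    rewrite G_eq, last_cons_nn by auto. rewrite Nat.even_succ. simpl. rewrite andb_true_r. reflexivity. }
  assert (Ky : K y = 0).
  { unfold K. rewrite (Prob_step_map p N y _ (fun _ => false)); auto.
    - rewrite !Prob_false by auto. ring.
    - intros w Hw. unfold EK. rewrite G_eq. reflexivity. }
  set (r := rr p). set (Sy := Sg r y). set (Sm := Sg r (N - y)).
  assert (Hr : 0 <= r). { unfold r, rr. apply Rmult_le_pos; [lra|]. left; apply Rinv_0_lt_compat; lra. }
  assert (HSy : 1 <= Sy) by (apply Sg_ge1; auto; lia).
  assert (HSm : 1 <= Sm) by (apply Sg_ge1; auto; lia).
  assert (L : forall h, harm p h 0 y -> forall z, (z <= y)%nat -> h z = h 0%nat + (h y - h 0%nat) * (Sg r z / Sy)).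
  { intros h Hh z Hz. rewrite (solve_harm p h 0 y Hp ltac:(lia) Hh z ltac:(lia)).
    rewrite !Nat.sub_0_r. reflexivity. }
  assert (R : forall h, harm p h y N -> forall z, (y <= z <= N)%nat -> h z = h y + (h N - h y) * (Sg r (z - y) / Sm)).
  { intros h Hh z Hz. rewrite (solve_harm p h y N Hp ltac:(lia) Hh z ltac:(lia)). reflexivity. }
  assert (E1 : (S y - y)%nat = 1%nat) by lia.
  assert (Sg1 : Sg r 1 = 1) by (simpl; ring).
  assert (US : U (S y) = U y * aa p N y).
  { rewrite (R U (proj2 HU)) by lia. rewrite E1, Sg1, UN. unfold aa. fold r. fold Sm. unfold Rdiv. ring. }
  assert (UP : U (Nat.pred y) = U y * bb p y).
  { rewrite (L U (proj1 HU)) by lia. rewrite U0. unfold bb. fold r. fold Sy. ring. }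
  assert (VS : V (S y) = V y * aa p N y).
  { rewrite (R V (proj2 HV)) by lia. rewrite E1, Sg1, VN. unfold aa. fold r. fold Sm. unfold Rdiv. ring. }
  assert (VP : V (Nat.pred y) = V y * bb p y).
  { rewrite (L V (proj1 HV)) by lia. rewrite V0. unfold bb. fold r. fold Sy. ring. }
  assert (KS : K (S y) = indb (f N) * (1 - aa p N y)).
  { rewrite (R K (proj2 HK)) by lia. rewrite E1, Sg1, KN, Ky. unfold aa. fold r. fold Sm. unfold Rdiv. ring. }
  assert (KP : K (Nat.pred y) = indb (f 0%nat) * (1 - bb p y)).
  { rewrite (L K (proj1 HK)) by lia. rewrite K0, Ky. unfold bb. fold r. fold Sy. ring. }
  assert (VyU : V y = rho p N y * U y).
  { rewrite Vy, US, UP. unfold rho. ring. }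
  assert (UyV : U y = rho p N y * V y + DD p N y f).
  { rewrite Uy at 1. rewrite VS, VP, KS, KP. unfold rho, DD. ring. }
  destruct (Nat.lt_ge_cases x y) as [Hlt|Hge].
  - exists (Sg r x / Sy). split; [|split; [|split; [|split]]].
    + change (U x = U y * (Sg r x / Sy)). rewrite (L U (proj1 HU)) by lia. rewrite U0. ring.
    + change (V x = rho p N y * U y * (Sg r x / Sy)). rewrite (L V (proj1 HV)) by lia. rewrite V0, VyU. ring.
    + change (U y * (1 - rho p N y ^ 2) = DD p N y f). rewrite UyV at 1. rewrite VyU. ring_simplify.
      rewrite VyU in UyV. nra.
    + intros _. reflexivity.
    + intros; lia.
  - exists (1 - Sg r (x - y) / Sm). split; [|split; [|split; [|split]]].
    + change (U x = U y * (1 - Sg r (x - y) / Sm)). rewrite (R U (proj2 HU)) by lia. rewrite UN. ring.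
    + change (V x = rho p N y * U y * (1 - Sg r (x - y) / Sm)). rewrite (R V (proj2 HV)) by lia. rewrite VN, VyU. ring.
    + change (U y * (1 - rho p N y ^ 2) = DD p N y f). rewrite VyU in UyV. nra.
    + intros; lia.
    + intros _. reflexivity.
Qed.

Lemma run_head N x s : inter N x -> absorbed N (run N x s) = true ->
  exists rest, run N x s = x :: rest.
Proof.
  intros Hx Ha. destruct s as [|b s].
  - unfold inter in Hx. unfold absorbed in Ha. simpl in Ha. rewrite Hx in Ha. discriminate.
  - simpl. unfold inter in Hx. rewrite Hx. eexists; reflexivity.
Qed.

Lemma run_ends N x s : absorbed N (run N x s) = true -> ends0N N (run N x s).
Proof.
  unfold absorbed, ends0N. intros H. apply orb_true_iff in H as [H|H]; apply Nat.eqb_eq in H; auto.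
Qed.

Lemma rr_pos p : 0 < p <= 1 -> 0 <= rr p.
Proof. intros. unfold rr. apply Rmult_le_pos; [lra|]. left; apply Rinv_0_lt_compat; lra. Qed.

Lemma aa_range p N y : 0 < p <= 1 -> (y < N)%nat -> 0 <= aa p N y < 1.
Proof.
  intros Hp Hy. unfold aa. pose proof (Sg_ge1 (rr p) (N - y) (rr_pos p Hp) ltac:(lia)).
  assert (0 < 1 / Sg (rr p) (N - y) <= 1).
  { split. apply Rdiv_lt_0_compat; lra. unfold Rdiv. rewrite Rmult_1_l. rewrite <- Rinv_1. apply Rinv_le_contravar; lra. }
  lra.
Qed.

Lemma bb_range p y : 0 < p <= 1 -> (0 < y)%nat -> 0 <= bb p y <= 1.
Proof.
  intros Hp Hy. unfold bb. pose proof (Sg_ge1 (rr p) y (rr_pos p Hp) ltac:(lia)).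
  pose proof (Sg_nonneg (rr p) (Nat.pred y) (rr_pos p Hp)).
  pose proof (Sg_mono (rr p) (Nat.pred y) y (rr_pos p Hp) ltac:(lia)).
  split. apply Rmult_le_pos; [lra|]. left; apply Rinv_0_lt_compat; lra.
  apply (Rmult_le_reg_r (Sg (rr p) y)); [lra|]. unfold Rdiv. rewrite Rmult_assoc, Rinv_l; lra.
Qed.

Lemma rho_nonneg p N y : 0 < p <= 1 -> (0 < y < N)%nat -> 0 <= rho p N y.
Proof.
  intros Hp Hy. unfold rho. pose proof (aa_range p N y Hp ltac:(lia)). pose proof (bb_range p y Hp ltac:(lia)).
  nra.
Qed.

Lemma ratio p N x y f E :
  0 < p <= 1 -> (0 < y < N)%nat -> (0 < x < N)%nat -> x <> y ->
  (forall s, absorbed N (run N x s) = true ->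
      E (run N x s) = (0 <? G y (run N x s))%nat && f (last (run N x s) 0%nat)) ->
  0 < DD p N y f -> ((x < y)%nat \/ 0 < rr p) ->
  CProb p N x (fun w => Nat.odd (G y w)) E = 1 / (1 + rho p N y).
Proof.
  intros Hp Hy Hx Hxy HE HD HC.
  assert (Hp' : 0 <= p <= 1) by lra.
  unfold CProb.
  rewrite (Prob_ext p N x _ (EU y f)); auto.
  2: { intros s Ha. rewrite HE by auto. unfold EU. destruct (G y (run N x s)); reflexivity. }
  rewrite (Prob_ext p N x E (fun w => EU y f w || EV y f w)); auto.
  2: { intros s Ha. rewrite HE by auto. unfold EU, EV. destruct (G y (run N x s)) as [|n]; [reflexivity|].
       rewrite Nat.odd_succ, Nat.even_succ, <- Nat.negb_odd. simpl. destruct (Nat.odd n), (f _); reflexivity. }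
  rewrite (Prob_add p N x (fun w => EU y f w || EV y f w) (EU y f) (EV y f)); auto.
  all: try (intros w; unfold EU, EV; rewrite <- Nat.negb_odd;
       destruct (Nat.odd (G y w)), (0 <? G y w)%nat, (f _); reflexivity).
  destruct (master p N x y f Hp Hy Hx Hxy) as [C [H1 [H2 [H3 [H4 H5]]]]].
  rewrite H1, H2.
  set (u := Prob p N y (EU y f)) in *.
  pose proof (rho_nonneg p N y Hp Hy) as Hr.
  assert (Hu : u <> 0). { intros Z. rewrite Z in H3. lra. }
  assert (HCp : 0 < C).
  { destruct (Nat.lt_ge_cases x y) as [Hlt|Hge].
    - rewrite (H4 Hlt). pose proof (Sg_ge1 (rr p) x (rr_pos p Hp) ltac:(lia)).
      pose proof (Sg_ge1 (rr p) y (rr_pos p Hp) ltac:(lia)). apply Rdiv_lt_0_compat; lra.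
    - rewrite H5 by lia. destruct HC as [HC|HC]; [lia|].
      pose proof (Sg_smono (rr p) (x - y) (N - y) HC ltac:(lia)).
      pose proof (Sg_nonneg (rr p) (x - y) (rr_pos p Hp)).
      assert (Sg (rr p) (x - y) / Sg (rr p) (N - y) < 1).
      { apply (Rmult_lt_reg_r (Sg (rr p) (N - y))); [lra|]. unfold Rdiv. rewrite Rmult_assoc, Rinv_l; lra. }
      lra. }
  field. split; [lra|]. replace (u * C + rho p N y * u * C) with (u * (C * (1 + rho p N y))) by ring.
  apply Rmult_integral_contrapositive; split; auto. apply Rgt_not_eq. apply Rmult_lt_0_compat; lra.
Qed.

Lemma ubprob p N x y :
  0 < p <= 1 -> (0 < y < N)%nat -> (0 < x < y)%nat ->
  Prob p N x (fun w => Nat.odd (G y w)) = (Sg (rr p) x / Sg (rr p) y) / (1 + rho p N y).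
Proof.
  intros Hp Hy Hx.
  assert (Hp' : 0 <= p <= 1) by lra.
  rewrite (Prob_ext p N x _ (EU y (fun _ => true))); auto.
  2: { intros s _. unfold EU. rewrite andb_true_r. reflexivity. }
  destruct (master p N x y (fun _ => true) Hp Hy ltac:(lia) ltac:(lia)) as [C [H1 [H2 [H3 [H4 H5]]]]].
  rewrite H1, (H4 ltac:(lia)).
  set (u := Prob p N y (EU y (fun _ => true))) in *.
  pose proof (rho_nonneg p N y Hp Hy) as Hr.
  assert (HD : DD p N y (fun _ => true) = 1 - rho p N y) by (unfold DD, rho, indb; simpl; ring).
  pose proof (aa_range p N y Hp ltac:(lia)). pose proof (bb_range p y Hp ltac:(lia)).
  assert (Hlt : rho p N y < 1) by (unfold rho; nra).
  assert (Hu : u = 1 / (1 + rho p N y)).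
  { rewrite HD in H3.
    apply (Rmult_eq_reg_r ((1 - rho p N y) * (1 + rho p N y))). 
    - replace (1 - rho p N y ^ 2) with ((1 - rho p N y) * (1 + rho p N y)) in H3 by ring.
      rewrite H3. field. lra.
    - apply Rmult_integral_contrapositive; split; lra. }
  rewrite Hu. pose proof (Sg_ge1 (rr p) y (rr_pos p Hp) ltac:(lia)). field. split; apply Rgt_not_eq; lra.
Qed.

Lemma ipart_spec r : 0 <= r -> r - 1 < INR (ipart r) <= r.
Proof.
  intros Hr. unfold ipart. destruct (base_Int_part r) as [H1 H2].
  assert (Hz : (0 <= Int_part r)%Z).
  { assert (-1 < IZR (Int_part r)) by lra. apply lt_IZR in H. lia. }
  rewrite INR_IZR_INZ, Z2Nat.id by exact Hz. lra.
Qed.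

Definition diverge (g : nat -> nat) := forall M, exists N0, forall N, (N0 <= N)%nat -> (M <= g N)%nat.

Lemma cv_eventually (u v : nat -> R) l : (exists N0, forall N, (N0 <= N)%nat -> u N = v N) ->
  Un_cv v l -> Un_cv u l.
Proof.
  intros [N0 H] Hv eps He. destruct (Hv eps He) as [N1 H1]. exists (max N0 N1).
  intros n Hn. rewrite H by lia. apply H1; lia.
Qed.

Lemma cv_compose (h : nat -> R) g l : diverge g -> Un_cv h l -> Un_cv (fun N => h (g N)) l.
Proof.
  intros Hg Hh eps He. destruct (Hh eps He) as [M HM]. destruct (Hg M) as [N0 H0].
  exists N0. intros n Hn. apply HM. apply H0; lia.
Qed.

Lemma CV_inv (u : nat -> R) l : Un_cv u l -> l <> 0 -> Un_cv (fun n => / u n) (/ l).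
Proof.
  intros Hu Hl.
  assert (Hc : continuity_pt (/ id)%F l).
  { apply continuity_pt_inv; [|exact Hl]. apply derivable_continuous_pt, derivable_pt_id. }
  exact (continuity_seq _ _ _ Hc Hu).
Qed.

Lemma big_N (M : R) : exists N0 : nat, forall N, (N0 <= N)%nat -> M < INR N.
Proof.
  destruct (INR_unbounded M) as [n Hn]. exists n. intros N HN. apply le_INR in HN. lra.
Qed.

Lemma div_ipart g (gam : R) : 0 < gam -> (forall N, g N = ipart (gam * INR N)) -> diverge g.
Proof.
  intros Hg Hgd M. destruct (big_N ((INR M + 1) / gam)) as [N0 H0]. exists N0. intros N HN.
  specialize (H0 N HN). rewrite Hgd. pose proof (ipart_spec (gam * INR N) ltac:(pose proof (pos_INR N); nra)).
  apply INR_le. assert (gam * INR N > INR M + 1).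
  { apply (Rmult_lt_reg_l (/ gam)). apply Rinv_0_lt_compat; lra.
    rewrite <- Rmult_assoc, Rinv_l, Rmult_1_l by lra. unfold Rdiv in H0. lra. }
  lra.
Qed.

Lemma div_ipart_compl g (gam : R) : 0 < gam < 1 -> (forall N, g N = ipart (gam * INR N)) ->
  diverge (fun N => N - g N)%nat.
Proof.
  intros Hg Hgd M. destruct (big_N ((INR M + 1) / (1 - gam))) as [N0 H0]. exists N0. intros N HN.
  specialize (H0 N HN). rewrite Hgd. pose proof (ipart_spec (gam * INR N) ltac:(pose proof (pos_INR N); nra)).
  assert (Hle : (ipart (gam * INR N) <= N)%nat).
  { apply INR_le. pose proof (pos_INR N). nra. }
  apply INR_le. rewrite minus_INR by exact Hle.
  assert ((1 - gam) * INR N > INR M + 1).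
  { apply (Rmult_lt_reg_l (/ (1 - gam))). apply Rinv_0_lt_compat; lra.
    rewrite <- Rmult_assoc, Rinv_l, Rmult_1_l by lra. unfold Rdiv in H0. lra. }
  lra.
Qed.

Lemma div_pred g : diverge g -> diverge (fun N => Nat.pred (g N)).
Proof. intros H M. destruct (H (S M)) as [N0 H0]. exists N0. intros N HN. specialize (H0 N HN). lia. Qed.

Lemma Sg_closed r m : Sg r m * (1 - r) = 1 - r ^ m.
Proof. induction m; simpl; [ring|]. rewrite Rmult_plus_distr_r, IHm. ring. Qed.

Lemma pow_cv0 r : 0 <= r < 1 -> Un_cv (fun m => r ^ m) 0.
Proof.
  intros Hr eps He. destruct (pow_lt_1_zero r ltac:(rewrite Rabs_right; lra) eps He) as [N0 H0].
  exists N0. intros n Hn. unfold Rdist. rewrite Rminus_0_r. apply H0; lia.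
Qed.

Lemma Sg_cv r : 0 <= r < 1 -> Un_cv (Sg r) (/ (1 - r)).
Proof.
  intros Hr.
  assert (H : Un_cv (fun m => (1 - r ^ m) * / (1 - r)) ((1 - 0) * / (1 - r))).
  { apply CV_mult; [apply CV_minus; [apply cv_const | apply pow_cv0; auto] | apply cv_const]. }
  replace ((1 - 0) * / (1 - r)) with (/ (1 - r)) in H by ring.
  eapply Un_cv_ext; [|exact H]. intros m. simpl.
  apply (Rmult_eq_reg_r (1 - r)); [|lra]. rewrite Sg_closed. field. lra.
Qed.

Lemma Sg_pow_le r m : 0 <= r <= 1 -> INR m * r ^ m <= Sg r m.
Proof.
  intros Hr. induction m; [simpl; lra|]. cbn [Sg pow].
  rewrite S_INR. pose proof (pow_le r m ltac:(lra)).
  assert (r * r ^ m <= r ^ m) by nra.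
  assert (INR m * (r * r ^ m) <= INR m * r ^ m) by (apply Rmult_le_compat_l; [apply pos_INR|lra]).
  nra.
Qed.

Lemma invSg_bound r m : 0 <= r <= 1 -> (1 <= m)%nat -> 1 / Sg r m <= 1 / INR m + (1 - r).
Proof.
  intros Hr Hm. pose proof (Sg_ge1 r m ltac:(lra) Hm). pose proof (Sg_pow_le r m Hr).
  pose proof (Sg_closed r m). assert (Hm' : 1 <= INR m) by (apply (le_INR 1); lia).
  assert (Sg r m / INR m >= r ^ m).
  { apply Rle_ge. apply (Rmult_le_reg_r (INR m)); [lra|]. unfold Rdiv. rewrite Rmult_assoc, Rinv_l by lra. lra. }
  apply (Rmult_le_reg_r (Sg r m)); [lra|].
  unfold Rdiv in *. rewrite Rmult_assoc, Rinv_l by lra.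
  rewrite Rmult_plus_distr_r. lra.
Qed.

Lemma rr_le1 p : 1/2 <= p -> rr p <= 1.
Proof. intros. unfold rr. apply (Rmult_le_reg_r p); [lra|]. unfold Rdiv. rewrite Rmult_assoc, Rinv_l; lra. Qed.

Lemma one_minus_bb p y : 0 < p <= 1 -> (0 < y)%nat ->
  1 - bb p y = rr p ^ (Nat.pred y) / Sg (rr p) y.
Proof.
  intros Hp Hy. unfold bb. pose proof (Sg_ge1 (rr p) y (rr_pos p Hp) Hy).
  destruct y as [|y]; [lia|]. simpl Nat.pred. simpl Sg. field. simpl in H. lra.
Qed.

Lemma pow_le1 r k : 0 <= r <= 1 -> r ^ k <= 1.
Proof. intros Hr. induction k; simpl; [lra|]. pose proof (pow_le r k ltac:(lra)). nra. Qed.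

Lemma rho_bound p N y : 1/2 <= p < 1 -> (0 < y < N)%nat ->
  0 <= 1 - rho p N y <= 1 / INR (N - y) + 1 / INR y + 2 * (1 - rr p).
Proof.
  intros Hp Hy. assert (Hp' : 0 < p <= 1) by lra.
  pose proof (rr_pos p Hp'). pose proof (rr_le1 p ltac:(lra)).
  pose proof (aa_range p N y Hp' ltac:(lia)). pose proof (bb_range p y Hp' ltac:(lia)).
  assert (A1 : 1 - aa p N y <= 1 / INR (N - y) + (1 - rr p)).
  { unfold aa. replace (1 - (1 - 1 / Sg (rr p) (N - y))) with (1 / Sg (rr p) (N - y)) by ring.
    apply invSg_bound; [lra|lia]. }
  assert (B1 : 1 - bb p y <= 1 / INR y + (1 - rr p)).
  { rewrite one_minus_bb by (auto; lia). pose proof (Sg_ge1 (rr p) y ltac:(lra) ltac:(lia)).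
    pose proof (pow_le (rr p) (Nat.pred y) ltac:(lra)).
    pose proof (pow_le1 (rr p) (Nat.pred y) ltac:(lra)).
    pose proof (invSg_bound (rr p) y ltac:(lra) ltac:(lia)).
    assert (rr p ^ Nat.pred y / Sg (rr p) y <= 1 / Sg (rr p) y).
    { unfold Rdiv. apply Rmult_le_compat_r; [left; apply Rinv_0_lt_compat; lra|lra]. }
    lra. }
  assert (Hr : 1 - rho p N y = p * (1 - aa p N y) + (1 - p) * (1 - bb p y)) by (unfold rho; ring).
  rewrite Hr. split; nra.
Qed.

Definition goodp (pN : nat -> R) :=
  exists N1 K, 0 <= K /\ forall N, (N1 <= N)%nat -> 1/2 <= pN N < 1 /\ 1 - rr (pN N) <= K / INR N.

Lemma goodp_sym : goodp (fun _ => / 2).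
Proof.
  exists 1%nat, 0. split; [lra|]. intros N HN. split; [lra|].
  unfold rr. replace ((1 - /2) / (/2)) with 1 by field. unfold Rdiv. rewrite Rmult_0_l. lra.
Qed.

Lemma goodp_weak c : 0 < c -> goodp (fun N => / 2 + c / INR N).
Proof.
  intros Hc. destruct (big_N (2 * c + 1)) as [N1 H1]. exists N1, (4 * c). split; [lra|].
  intros N HN. specialize (H1 N HN).
  assert (HN0 : 0 < INR N) by lra.
  assert (Hcn : 0 < c / INR N < /2).
  { split. apply Rdiv_lt_0_compat; lra.
    apply (Rmult_lt_reg_r (INR N)); [lra|]. unfold Rdiv. rewrite Rmult_assoc, Rinv_l; lra. }
  split; [lra|].
  unfold rr. set (t := c / INR N) in *.
  assert (E : 1 - (1 - (/2 + t)) / (/2 + t) = 2 * t / (/2 + t)) by (field; repeat split; intro; nra).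
  rewrite E.
  replace (4 * c / INR N) with (4 * t) by (unfold t; field; lra).
  apply (Rmult_le_reg_r (/2 + t)); [lra|]. unfold Rdiv. rewrite Rmult_assoc, Rinv_l by lra. nra.
Qed.

Lemma conds (alpha beta : R) : 0 < alpha < 1 -> 0 < beta < 1 -> alpha <> beta ->
  exists N0, forall N, (N0 <= N)%nat ->
    let x := ipart (alpha * INR N) in let y := ipart (beta * INR N) in
    (0 < x < N)%nat /\ (0 < y < N)%nat /\ x <> y /\ (alpha < beta -> (x < y)%nat).
Proof.
  intros Ha Hb Hab.
  assert (Hd : 0 < Rabs (beta - alpha)) by (apply Rabs_pos_lt; lra).
  destruct (big_N (1 / alpha + 1 / beta + 1 / Rabs (beta - alpha) + 1)) as [N0 H0].
  exists N0. intros N HN x y. specialize (H0 N HN).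
  assert (P1 : 0 < 1 / alpha) by (apply Rdiv_lt_0_compat; lra).
  assert (P2 : 0 < 1 / beta) by (apply Rdiv_lt_0_compat; lra).
  assert (P3 : 0 < 1 / Rabs (beta - alpha)) by (apply Rdiv_lt_0_compat; lra).
  assert (HN1 : 1 < INR N) by lra.
  assert (Ax : 1 < alpha * INR N).
  { apply (Rmult_lt_reg_l (/ alpha)). apply Rinv_0_lt_compat; lra.
    rewrite <- Rmult_assoc, Rinv_l, Rmult_1_l by lra. unfold Rdiv in P1. lra. }
  assert (Ay : 1 < beta * INR N).
  { apply (Rmult_lt_reg_l (/ beta)). apply Rinv_0_lt_compat; lra.
    rewrite <- Rmult_assoc, Rinv_l, Rmult_1_l by lra. unfold Rdiv in P2. lra. }
  assert (Ad : 1 < Rabs (beta - alpha) * INR N).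
  { apply (Rmult_lt_reg_l (/ Rabs (beta - alpha))). apply Rinv_0_lt_compat; lra.
    rewrite <- Rmult_assoc, Rinv_l, Rmult_1_l by lra. unfold Rdiv in P3. lra. }
  pose proof (ipart_spec (alpha * INR N) ltac:(lra)) as Sx.
  pose proof (ipart_spec (beta * INR N) ltac:(lra)) as Sy.
  fold x in Sx. fold y in Sy.
  assert (xN : alpha * INR N < INR N) by nra.
  assert (yN : beta * INR N < INR N) by nra.
  assert (Ox : (0 < x < N)%nat) by (split; apply INR_lt; simpl; lra).
  assert (Oy : (0 < y < N)%nat) by (split; apply INR_lt; simpl; lra).
  assert (Lt : alpha < beta -> (x < y)%nat).
  { intros Hl. rewrite Rabs_right in Ad by lra. apply INR_lt. nra. }
  split; [auto|split; [auto|split; [|auto]]].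
  intros E. destruct (Rlt_le_dec alpha beta) as [Hl|Hl].
  - specialize (Lt Hl). lia.
  - assert (alpha > beta) by lra. rewrite Rabs_left in Ad by lra.
    assert (Hyx : INR y < INR x) by nra. apply INR_lt in Hyx. lia.
Qed.

Lemma part_i_lim (pN : nat -> R) (beta : R) : 0 < beta < 1 -> goodp pN ->
  Un_cv (fun N => 1 / (1 + rho (pN N) N (ipart (beta * INR N)))) (/ 2).
Proof.
  intros Hb [N1 [K [HK Hp]]] eps He.
  set (Kt := 1 / (1 - beta) + 2 / beta + 2 * K).
  assert (HKt : 0 < Kt).
  { unfold Kt. assert (0 < 1 / (1 - beta)) by (apply Rdiv_lt_0_compat; lra).
    assert (0 < 2 / beta) by (apply Rdiv_lt_0_compat; lra). lra. }
  destruct (big_N (2 / beta + Kt / eps + 1)) as [N2 H2].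
  exists (max N1 N2). intros N HNN.
  destruct (Hp N ltac:(lia)) as [Hp1 Hp2]. specialize (H2 N ltac:(lia)). clear HNN.
  set (p := pN N) in *. set (y := ipart (beta * INR N)).
  assert (P2 : 0 < 2 / beta) by (apply Rdiv_lt_0_compat; lra).
  assert (P3 : 0 < Kt / eps) by (apply Rdiv_lt_0_compat; lra).
  assert (HN : 1 < INR N) by lra.
  assert (Hb2 : 2 < beta * INR N).
  { apply (Rmult_lt_reg_l (/ beta)). apply Rinv_0_lt_compat; lra.
    rewrite <- Rmult_assoc, Rinv_l, Rmult_1_l by lra. unfold Rdiv in P2. lra. }
  assert (HKe : Kt < eps * INR N).
  { apply (Rmult_lt_reg_l (/ eps)). apply Rinv_0_lt_compat; lra.
    rewrite <- Rmult_assoc, Rinv_l, Rmult_1_l by lra. unfold Rdiv in P3. lra. }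
  pose proof (ipart_spec (beta * INR N) ltac:(lra)) as Sy. fold y in Sy.
  assert (Hy : (0 < y < N)%nat) by (split; apply INR_lt; simpl; nra).
  pose proof (rho_bound p N y ltac:(lra) Hy) as RB. pose proof (rho_nonneg p N y ltac:(lra) Hy) as RN.
  assert (B1 : 1 / INR (N - y) <= (1 / (1 - beta)) * / INR N).
  { rewrite minus_INR by lia. replace ((1 / (1 - beta)) * / INR N) with (1 / ((1 - beta) * INR N)) by (field; repeat split; intro; nra).
    unfold Rdiv. rewrite !Rmult_1_l. apply Rinv_le_contravar; nra. }
  assert (B2 : 1 / INR y <= (2 / beta) * / INR N).
  { replace ((2 / beta) * / INR N) with (1 / (beta * INR N / 2)) by (field; repeat split; intro; nra).
    unfold Rdiv. rewrite !Rmult_1_l. apply Rinv_le_contravar; lra. }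
  assert (B3 : 1 - rr p <= K * / INR N) by exact Hp2.
  assert (Hrho : 1 - rho p N y <= Kt * / INR N) by (unfold Kt; lra).
  assert (Hlt : Kt * / INR N < eps).
  { apply (Rmult_lt_reg_r (INR N)); [lra|]. rewrite Rmult_assoc, Rinv_l by lra. lra. }
  unfold Rdist.
  replace (1 / (1 + rho p N y) - / 2) with ((1 - rho p N y) / (2 * (1 + rho p N y))) by (field; repeat split; intro; nra).
  rewrite Rabs_right.
  2: { apply Rle_ge. apply Rmult_le_pos; [lra|]. left; apply Rinv_0_lt_compat; lra. }
  apply (Rle_lt_trans _ (1 - rho p N y)); [|lra].
  apply (Rmult_le_reg_r (2 * (1 + rho p N y))); [lra|].
  unfold Rdiv. rewrite Rmult_assoc, Rinv_l by lra. nra.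
Qed.

Lemma part_i_generic (pN : nat -> R) (alpha beta : R) (Ev : nat -> nat -> list nat -> bool) (f : nat -> nat -> bool) :
  0 < alpha < 1 -> 0 < beta < 1 -> alpha <> beta -> goodp pN ->
  (forall N x y s, (0 < x < N)%nat -> x <> y -> (0 < y < N)%nat -> absorbed N (run N x s) = true ->
     Ev N y (run N x s) = (0 <? G y (run N x s))%nat && f N (last (run N x s) 0%nat)) ->
  (forall N y p, 0 < p < 1 -> (0 < y < N)%nat -> 0 < DD p N y (f N)) ->
  Un_cv (fun N => CProb (pN N) N (ipart (alpha * INR N)) (fun w => Nat.odd (G (ipart (beta * INR N)) w))
                        (Ev N (ipart (beta * INR N)))) (/ 2).
Proof.
  intros Ha Hb Hab Hg HE HD.
  eapply cv_eventually; [|apply (part_i_lim pN beta Hb Hg)].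
  destruct (conds alpha beta Ha Hb Hab) as [N0 H0].
  destruct Hg as [N1 [K [HK Hp]]].
  exists (max N0 N1). intros N HN. destruct (H0 N ltac:(lia)) as [Hx [Hy [Hxy _]]].
  destruct (Hp N ltac:(lia)) as [Hp1 _].
  assert (Hpp : 0 < pN N <= 1) by lra.
  apply (ratio _ _ _ _ (f N) _ Hpp Hy Hx Hxy).
  - intros s Ha'. apply HE; auto.
  - apply HD; auto; lra.
  - right. unfold rr. apply Rdiv_lt_0_compat; lra.
Qed.

Lemma HE_gen N x y s : (0 < x < N)%nat -> x <> y -> (0 < y < N)%nat -> absorbed N (run N x s) = true ->
  exists rest, run N x s = x :: rest /\ goodpath N (x :: rest) /\ ends0N N (x :: rest).
Proof.
  intros Hx Hxy Hy Ha. destruct (run_head N x s (inter_of N x Hx) Ha) as [rest Hr].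
  exists rest. split; [auto|]. rewrite <- Hr. split. apply run_good; lia. apply run_ends; auto.
Qed.

Lemma DD_N N y p : 0 < p < 1 -> (0 < y < N)%nat -> 0 < DD p N y (fun z => (z =? N)%nat).
Proof.
  intros Hp Hy. unfold DD, indb. rewrite Nat.eqb_refl.
  assert (E : (0 =? N)%nat = false) by (apply Nat.eqb_neq; lia). rewrite E.
  pose proof (aa_range p N y ltac:(lra) ltac:(lia)). cbv iota. nra.
Qed.

Lemma one_minus_bb_pos p y : 0 < p < 1 -> (0 < y)%nat -> 0 < 1 - bb p y.
Proof.
  intros Hp Hy. rewrite one_minus_bb by (auto; lra).
  assert (0 < rr p) by (unfold rr; apply Rdiv_lt_0_compat; lra).
  pose proof (Sg_ge1 (rr p) y ltac:(lra) Hy).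
  apply Rdiv_lt_0_compat; [apply pow_lt; auto|lra].
Qed.

Lemma DD_0 N y p : 0 < p < 1 -> (0 < y < N)%nat -> 0 < DD p N y (fun z => (z =? 0)%nat).
Proof.
  intros Hp Hy. unfold DD, indb. simpl.
  assert (E : (N =? 0)%nat = false) by (apply Nat.eqb_neq; lia). rewrite E.
  pose proof (one_minus_bb_pos p y Hp ltac:(lia)). nra.
Qed.

Lemma DD_t N y p : 0 < p < 1 -> (0 < y < N)%nat -> 0 < DD p N y (fun _ => true).
Proof.
  intros Hp Hy. unfold DD, indb.
  pose proof (one_minus_bb_pos p y Hp ltac:(lia)). pose proof (aa_range p N y ltac:(lra) ltac:(lia)). nra.
Qed.

Lemma part_ii (alpha beta p : R) : 0 < alpha < 1 -> 0 < beta < 1 -> alpha < beta ->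
  0 <= 1 - p -> 1 - p < p ->
  Un_cv (fun N => Prob p N (ipart (alpha * INR N)) (fun w => Nat.odd (G (ipart (beta * INR N)) w)))
        (1 / (2 - (p - (1 - p)))).
Proof.
  intros Ha Hb Hab Hq Hpq.
  assert (Hp : 0 < p <= 1) by lra.
  set (r := rr p).
  assert (Hr : 0 <= r < 1).
  { split. apply rr_pos; auto. unfold r, rr. apply (Rmult_lt_reg_r p); [lra|].
    unfold Rdiv. rewrite Rmult_assoc, Rinv_l; lra. }
  set (s := / (1 - r)).
  assert (Hs : 0 < s) by (apply Rinv_0_lt_compat; lra).
  set (xN := fun N => ipart (alpha * INR N)). set (yN := fun N => ipart (beta * INR N)).
  assert (Dx : diverge xN) by (apply (div_ipart xN alpha); [lra|reflexivity]).
  assert (Dy : diverge yN) by (apply (div_ipart yN beta); [lra|reflexivity]).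
  assert (Dm : diverge (fun N => N - yN N)%nat) by (apply (div_ipart_compl yN beta); [lra|reflexivity]).
  assert (Dp : diverge (fun N => Nat.pred (yN N))) by (apply div_pred; auto).
  pose proof (Sg_cv r Hr) as SC. fold s in SC.
  pose proof (cv_compose _ _ _ Dx SC) as Cx.
  pose proof (cv_compose _ _ _ Dy SC) as Cy.
  pose proof (cv_compose _ _ _ Dm SC) as Cm.
  pose proof (cv_compose _ _ _ Dp SC) as Cp.
  assert (Hs0 : s <> 0) by lra.
  pose proof (CV_inv _ _ Cy Hs0) as Iy.
  pose proof (CV_inv _ _ Cm Hs0) as Im.
  pose proof (CV_mult _ _ _ _ Cx Iy) as Q1.
  pose proof (CV_mult _ _ _ _ Cp Iy) as Q2.
  pose proof (CV_minus _ _ _ _ (cv_const 1) Im) as Q3.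
  pose proof (CV_plus _ _ _ _ (CV_mult _ _ _ _ (cv_const p) Q3) (CV_mult _ _ _ _ (cv_const (1 - p)) Q2)) as Q4.
  pose proof (CV_plus _ _ _ _ (cv_const 1) Q4) as Q5.
  assert (E1 : s * / s = 1) by (field; lra).
  assert (E2 : / s = 1 - r) by (unfold s; rewrite Rinv_inv; reflexivity).
  assert (Hne : 1 + (p * (1 - / s) + (1 - p) * (s * / s)) <> 0).
  { rewrite E1, E2. unfold r, rr. intro Z. field_simplify in Z; [|lra]. nra. }
  pose proof (CV_mult _ _ _ _ Q1 (CV_inv _ _ Q5 Hne)) as Q6.
  replace (1 / (2 - (p - (1 - p)))) with (s * / s * / (1 + (p * (1 - / s) + (1 - p) * (s * / s)))).
  2: { rewrite E1, E2. unfold r, rr. field. lra. }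
  destruct (conds alpha beta Ha Hb ltac:(lra)) as [N0 H0].
  eapply cv_eventually; [|exact Q6].
  exists N0. intros N HN. destruct (H0 N HN) as [Hx [Hy [_ Hlt]]].
  specialize (Hlt Hab).
  rewrite ubprob by (auto; lia). unfold rho, aa, bb. fold r. unfold xN, yN. unfold Rdiv. rewrite !Rmult_1_l. reflexivity.
Qed.

Theorem proposition4p3 (alpha beta : R) :
  0 < alpha < 1 -> 0 < beta < 1 -> alpha <> beta ->
  (* (i) symmetric or weakly asymmetric walk *)
  (forall pN : nat -> R,
      (pN = (fun _ => / 2) \/
       exists c : R, 0 < c /\ pN = (fun N => / 2 + c / INR N)) ->
      Un_cv (fun N =>
        let x := ipart (alpha * INR N) in let y := ipart (beta * INR N) in
        CProb (pN N) N x (fun w => Nat.odd (G y w))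
              (fun w => ltT (T y w) (T N w) && ltT (T N w) (T 0 w))) (/ 2)
   /\ Un_cv (fun N =>
        let x := ipart (alpha * INR N) in let y := ipart (beta * INR N) in
        CProb (pN N) N x (fun w => Nat.odd (G y w))
              (fun w => ltT (T y w) (T 0 w) && ltT (T 0 w) (T N w))) (/ 2)
   /\ Un_cv (fun N =>
        let x := ipart (alpha * INR N) in let y := ipart (beta * INR N) in
        CProb (pN N) N x (fun w => Nat.odd (G y w))
              (fun w => ltT (T y w) (minT (T 0 w) (T N w)))) (/ 2))
  /\
  (* (ii) asymmetric walk, fixed q = 1 - p < p, alpha < beta *)
  (forall p : R, 0 <= 1 - p -> 1 - p < p -> alpha < beta ->
      Un_cv (fun N =>
        let x := ipart (alpha * INR N) in let y := ipart (beta * INR N) in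
        Prob p N x (fun w => Nat.odd (G y w))) (1 / (2 - (p - (1 - p))))).
Proof.
  intros Ha Hb Hab. split.
  - intros pN HpN.
    assert (Hg : goodp pN) by (destruct HpN as [->|[c [Hc ->]]]; [apply goodp_sym|apply goodp_weak; auto]).
    split; [|split].
    + apply (part_i_generic pN alpha beta (fun N y w => ltT (T y w) (T N w) && ltT (T N w) (T 0 w))
               (fun N z => (z =? N)%nat) Ha Hb Hab Hg); [|apply DD_N].
      intros N x y s Hx Hxy Hy Hab'. destruct (HE_gen N x y s Hx Hxy Hy Hab') as [rest [Hr [Hgd He]]].
      rewrite Hr. apply (ev_facts N x y rest Hx Hxy Hy Hgd He).
    + apply (part_i_generic pN alpha beta (fun N y w => ltT (T y w) (T 0 w) && ltT (T 0 w) (T N w))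
               (fun N z => (z =? 0)%nat) Ha Hb Hab Hg); [|apply DD_0].
      intros N x y s Hx Hxy Hy Hab'. destruct (HE_gen N x y s Hx Hxy Hy Hab') as [rest [Hr [Hgd He]]].
      rewrite Hr. apply (ev_facts N x y rest Hx Hxy Hy Hgd He).
    + apply (part_i_generic pN alpha beta (fun N y w => ltT (T y w) (minT (T 0 w) (T N w)))
               (fun N z => true) Ha Hb Hab Hg); [|apply DD_t].
      intros N x y s Hx Hxy Hy Hab'. destruct (HE_gen N x y s Hx Hxy Hy Hab') as [rest [Hr [Hgd He]]].
      rewrite Hr, andb_true_r. apply (ev_facts N x y rest Hx Hxy Hy Hgd He).
  - intros p Hq Hpq Hab'. apply part_ii; auto.
Qed.
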